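(* Let $G=(V,E)$ be an $n$-vertex graph, $q>0$ an integer, $0<\alpha\le1$, and suppose $n\ge q c_q/\alpha^2$, where $c_q=\sum_{i=0}^{q}q^i$. Let $u,v$ be two vertices chosen uniformly at random from $V$, and let $H_u$ and $H_v$ be the subgraphs visited by two (independent) $q$-random BFS starting at $u$ and $v$, respectively. Then with probability at least $1-2\alpha q c_q$, no edge is contained in both $H_u$ and $H_v$.
   Context: $q$-random BFS ($q$-RBFS) from a vertex $v$ in the random neighbor model (where a random neighbor query for $u$ returns a uniformly random neighbor of $u$): initialize a queue $Q=(v)$, level $\ell[v]=0$ (all others $\infty$), and $H=(\{v\},\emptyset)$ rooted at $v$; while $Q$ is nonempty, pop $u$ and make $q$ independent random neighbor queries for $u$ obtaining $s_{u,1},\dots,s_{u,q}$; for each $i$ add $s_{u,i}$ and the edge $\{u,s_{u,i}\}$ to $H$, and if $\ell[u]<q-1$ and $\ell[s_{u,i}]=\infty$, set $\ell[s_{u,i}]=\ell[u]+1$ and enqueue $s_{u,i}$; return $H$ (undirected, simple). *)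

(* Defs.v *)
From mathcomp Require Import all_boot all_order all_algebra.
Set Implicit Arguments. Unset Strict Implicit. Unset Printing Implicit Defensive.
Import Order.TTheory GRing.Theory Num.Theory.

Section RBFS.
Variables (T : finType) (e : rel T) (q : nat).

Definition nbrs (x : T) : {set T} := [set y | e x y].
Definition deg (x : T) : nat := #|nbrs x|.

(* Random source of one q-RBFS run.  Since every vertex is popped (hence
   queried) at most once, the q random-neighbour answers for vertex w can be
   drawn in advance: [f w] is the tuple (s_{w,1},...,s_{w,q}).  [None] is the
   (only possible) answer for an isolated vertex. *)
Definition source := {ffun T -> q.-tuple (option T)}.

(* BFS state: queue, levels (None = infinity), edge set of H *)
Definition state := (seq T * {ffun T -> option nat} * {set {set T}})%type.

Definition step_sample (u : T) (st : state) (o : option T) : state :=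
  let: (Q, lvl, E) := st in
  match o with
  | None => st
  | Some s =>
      let E' := [set u; s] |: E in
      match lvl u, lvl s with
      | Some l, None =>
          if l < q.-1 then
            (rcons Q s, [ffun x => if x == s then Some l.+1 else lvl x], E')
          else (Q, lvl, E')
      | _, _ => (Q, lvl, E')
      end
  end.

Fixpoint bfs_loop (f : source) (fuel : nat) (st : state) : {set {set T}} :=
  match fuel with
  | 0 => st.2
  | k.+1 =>
      let: (Q, lvl, E) := st in
      match Q with
      | [::] => E
      | u :: Q' => bfs_loop f k (foldl (step_sample u) (Q', lvl, E) (tval (f u)))
      end
  end.

(* edge set of H returned by q-RBFS from v with random source f
   (each vertex is enqueued at most once, so #|T| pops suffice) *)
Definition rbfs_edges (f : source) (v : T) : {set {set T}} :=
  bfs_loop f #|T|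
    ([:: v], [ffun x => if x == v then Some 0 else None], set0).

Variable R : realFieldType.
Local Open Scope ring_scope.

Definition answer_weight (x : T) (o : option T) : R :=
  match o with
  | Some y => if e x y then ((deg x)%:R)^-1 else 0
  | None => if deg x == 0 then 1 else 0
  end.

Definition source_weight (f : source) : R :=
  \prod_(x : T) \prod_(o <- tval (f x)) answer_weight x o.

Definition prob_disjoint : R :=
  \sum_(u : T) \sum_(v : T) \sum_(f1 : source) \sum_(f2 : source)
    ((#|T| ^ 2)%:R^-1 * source_weight f1 * source_weight f2
      * (if rbfs_edges f1 u :&: rbfs_edges f2 v == set0 then 1 else 0)).

End RBFS.

Definition c_q (q : nat) : nat := \sum_(i < q.+1) q ^ i.

(* Main.v *)
Require Import Defs.
From mathcomp Require Import all_boot all_order all_algebra.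
From mathcomp.algebra_tactics Require Import ring lra.
Set Implicit Arguments. Unset Strict Implicit. Unset Printing Implicit Defensive.
Import Order.TTheory GRing.Theory Num.Theory.
Local Open Scope ring_scope.

Section Proof.
Variables (R : realFieldType) (T : finType) (e : rel T) (q : nat).
Hypothesis e_sym : symmetric e.

Notation A := (answer_weight e R).
Notation tup := (q.-tuple (option T)).
Definition tw (x : T) (t : tup) : R := \prod_(o <- tval t) A x o.
Local Notation mu := (@source_weight T e q R).

Lemma sum_option (F : option T -> R) :
  \sum_(o : option T) F o = F None + \sum_(y : T) F (Some y).
Proof.
rewrite (bigD1 None) //=; congr (_ + _).
rewrite (reindex_omap Some id) /=; last by move=> [y|].
by apply: eq_bigl => y; rewrite eqxx.
Qed.

Lemma A_ge0 x o : 0 <= A x o.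
Proof.
case: o => [y|] /=; last by case: ifP.
by case: ifP => // _; rewrite invr_ge0 ler0n.
Qed.

Lemma deg_pos x y : e x y -> (0 < deg e x)%N.
Proof. by move=> exy; apply/card_gt0P; exists y; rewrite inE. Qed.

Lemma A_sum x : \sum_o A x o = 1.
Proof.
rewrite sum_option /=.
case: (posnP (deg e x)) => [d0|dp].
  rewrite big1 ?addr0 // => y _.
  case: ifP => // exy; move: (deg_pos exy); by rewrite d0.
rewrite add0r.
rewrite -big_mkcond /= sumr_const.
have -> : #|[pred y | e x y]| = deg e x by rewrite /deg /nbrs cardsE.
by rewrite -[LHS]mulr_natr mulVf // pnatr_eq0 -lt0n.
Qed.

Lemma tw_ge0 x t : 0 <= tw x t.
Proof. by apply: prodr_ge0 => o _; apply: A_ge0. Qed.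

Lemma tuple_sum (F : 'I_q -> option T -> R) :
  \sum_(t : tup) \prod_(i < q) F i (tnth t i) = \prod_(i < q) \sum_o F i o.
Proof.
rewrite bigA_distr_bigA /=.
rewrite (reindex (@tuple_of_finfun _ q)) /=; last first.
  by exists (@finfun_of_tuple _ q) => g _; [rewrite tuple_of_finfunK | rewrite finfun_of_tupleK].
apply: eq_bigr => g _; apply: eq_bigr => i _.
by rewrite /tuple_of_finfun tnth_mktuple.
Qed.

Lemma tw_tnth x t : tw x t = \prod_(i < q) A x (tnth t i).
Proof. by rewrite /tw big_tuple. Qed.

Lemma tw_sum x : \sum_t tw x t = 1.
Proof.
under eq_bigr do rewrite tw_tnth.
rewrite (tuple_sum (fun _ o => A x o)).
by rewrite big1 // => i _; rewrite A_sum.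
Qed.

Lemma tw_idx x i0 z : \sum_t tw x t * (tnth t i0 == z)%:R = A x z.
Proof.
pose F i o := A x o * (if i == i0 then (o == z)%:R else 1).
have -> : \sum_t tw x t * (tnth t i0 == z)%:R = \sum_t \prod_(i < q) F i (tnth t i).
  apply: eq_bigr => t _; rewrite tw_tnth /F big_split /=; congr (_ * _).
  rewrite (bigD1 i0) //= eqxx big1 ?mulr1 // => i Hi.
  by rewrite (negbTE Hi).
rewrite tuple_sum (bigD1 i0) //= [X in _ * X]big1 ?mulr1; last first.
  move=> i Hi; rewrite /F (negbTE Hi).
  by under eq_bigr do rewrite mulr1; rewrite A_sum.
rewrite /F eqxx (bigD1 z) //= eqxx mulr1 big1 ?addr0 // => o Ho.
by rewrite (negbTE Ho) mulr0.
Qed.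

Lemma mem_le_sum (t : tup) z : ((z \in tval t)%:R : R) <= \sum_(i < q) (tnth t i == z)%:R.
Proof.
case: (tnthP t z) => [[i ->]|_]; last by apply: sumr_ge0 => i _; rewrite ler0n.
by rewrite (bigD1 i) //= eqxx lerDl; apply: sumr_ge0 => j _; rewrite ler0n.
Qed.

Lemma tw_mem x y : \sum_t tw x t * (Some y \in tval t)%:R <= q%:R * A x (Some y).
Proof.
apply: (@le_trans _ _ (\sum_t tw x t * \sum_(i < q) (tnth t i == Some y)%:R)).
  by apply: ler_sum => t _; apply: ler_wpM2l; [apply: tw_ge0 | apply: mem_le_sum].
under eq_bigr do rewrite mulr_sumr.
rewrite exchange_big /=.
under eq_bigr do rewrite tw_idx.
by rewrite sumr_const card_ord mulr_natl.
Qed.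

Lemma mu_tw f : mu f = \prod_x tw x (f x).
Proof. by []. Qed.

Lemma mu_ge0 f : 0 <= mu f.
Proof. by apply: prodr_ge0 => x _; apply: tw_ge0. Qed.

Lemma prod_partition (F : T * T -> R) (r : seq (T * T)) :
  \prod_(p <- r) F p = \prod_(x : T) \prod_(p <- r | p.1 == x) F p.
Proof.
under [RHS]eq_bigr do rewrite big_mkcond.
rewrite exchange_big /=; apply: eq_bigr => p _.
rewrite -big_mkcond /=.
by rewrite (big_pred1 p.1) // => x; rewrite /= eq_sym.
Qed.

Lemma sum_source (H : T -> tup -> R) :
  \sum_(f : source T q) \prod_x H x (f x) = \prod_x \sum_t H x t.
Proof. by rewrite bigA_distr_bigA. Qed.

Lemma mu_sum : \sum_f mu f = 1.
Proof.
under eq_bigr do rewrite mu_tw.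
by rewrite sum_source big1 // => x _; rewrite tw_sum.
Qed.

Lemma E_factor (r : seq (T * T)) (g : T -> T -> tup -> R) :
  uniq (map fst r) ->
  \sum_f mu f * \prod_(p <- r) g p.1 p.2 (f p.1)
  = \prod_(p <- r) \sum_t tw p.1 t * g p.1 p.2 t.
Proof.
move=> Hu.
transitivity (\sum_(f : source T q) \prod_x
   (tw x (f x) * \prod_(p <- r | p.1 == x) g p.1 p.2 (f x))).
  apply: eq_bigr => f _; rewrite mu_tw prod_partition -big_split /=.
  apply: eq_bigr => x _; congr (_ * _).
  by apply: eq_bigr => p /eqP ->.
rewrite (sum_source (fun x t => tw x t * \prod_(p <- r | p.1 == x) g p.1 p.2 t)).
rewrite [RHS]prod_partition; apply: eq_bigr => x _.
have Hs : (size [seq p <- r | p.1 == x] <= 1)%N.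
  rewrite size_filter.
  have -> : count (fun p : T * T => p.1 == x) r = count_mem x (map fst r).
    by rewrite count_map.
  by rewrite count_uniq_mem // leq_b1.
transitivity (\sum_t tw x t * \prod_(p <- [seq p <- r | p.1 == x]) g p.1 p.2 t).
  by apply: eq_bigr => t _; rewrite big_filter.
transitivity (\prod_(p <- [seq p <- r | p.1 == x]) \sum_t tw x t * g p.1 p.2 t); last first.
  rewrite big_filter; apply: eq_bigr => p /eqP -> //.
move: Hs; case: [seq p <- r | p.1 == x] => [|p [|p' s]] //= _.
  by under eq_bigr do rewrite big_nil mulr1; rewrite tw_sum big_nil.
by rewrite big_seq1; under eq_bigr do rewrite big_seq1.
Qed.


Lemma sum_ge_term (I : finType) (F : I -> R) i : (forall j, 0 <= F j) -> F i <= \sum_j F j.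
Proof.
move=> H; rewrite (bigD1 i) //= lerDl; apply: sumr_ge0 => j _; exact: H.
Qed.

Definition ef (f : source T q) (x y : T) : bool := Some y \in tval (f x).

Fixpoint inL (f : source T q) (k : nat) (u a : T) : bool :=
  if k is k'.+1 then [exists y, ef f u y && inL f k' y a] else a == u.

Definition inR f u a := [exists k : 'I_q, inL f k u a].

Fixpoint sumseq (d : nat) (F : seq T -> R) : R :=
  if d is d'.+1 then \sum_(y : T) sumseq d' (fun s => F (y :: s)) else F [::].

Lemma sumseq_le d F G : (forall s, size s = d -> F s <= G s) -> sumseq d F <= sumseq d G.
Proof.
elim: d F G => [|d IH] F G H /=; first by apply: H.
apply: ler_sum => y _; apply: IH => s Hs; apply: H; by rewrite /= Hs.
Qed.

Lemma eq_sumseq d F G : (forall s, F s = G s) -> sumseq d F = sumseq d G.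
Proof.
elim: d F G => [|d IH] F G H /=; first by apply: H.
apply: eq_bigr => y _; apply: IH => s; apply: H.
Qed.

Lemma sumseq_ge0 d F : (forall s, size s = d -> 0 <= F s) -> 0 <= sumseq d F.
Proof.
elim: d F => [|d IH] F H /=; first by apply: H.
apply: sumr_ge0 => y _; apply: IH => s Hs; apply: H; by rewrite /= Hs.
Qed.

Lemma sumseq_term d F s0 : (forall s, size s = d -> 0 <= F s) -> size s0 = d ->
  F s0 <= sumseq d F.
Proof.
elim: d F s0 => [|d IH] F s0 H Hs /=; first by case: s0 Hs.
case: s0 Hs => // y s0 [Hs].
have H' : forall z s, size s = d -> 0 <= F (z :: s) by move=> z s Hs'; apply: H; rewrite /= Hs'.
apply: le_trans (IH (fun s => F (y :: s)) s0 (H' y) Hs) _.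
apply: (@sum_ge_term _ (fun z => sumseq d (fun s => F (z :: s)))) => z.
by apply: sumseq_ge0 => s; apply: H'.
Qed.

Lemma sumseq_scale d c F : sumseq d (fun s => c * F s) = c * sumseq d F.
Proof.
elim: d F => [|d IH] F //=.
rewrite mulr_sumr; apply: eq_bigr => y _; exact: (IH (fun s => F (y :: s))).
Qed.

Lemma sumseq_sum d (I : finType) (F : I -> seq T -> R) :
  sumseq d (fun s => \sum_i F i s) = \sum_i sumseq d (F i).
Proof.
elim: d F => [|d IH] F //=.
transitivity (\sum_y \sum_i sumseq d (fun s => F i (y :: s))).
  by apply: eq_bigr => y _; exact: (IH (fun i s => F i (y :: s))).
by rewrite exchange_big.
Qed.

Lemma inL_path f k u a : inL f k u a ->
  exists2 s, size s = k & path (ef f) u s && (last u s == a).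
Proof.
elim: k u => [|k IH] u /=.
  by move=> /eqP ->; exists [::]; rewrite //= eqxx.
case/existsP => y /andP [Huy /IH [s Hs /andP [Hp Hl]]].
by exists (y :: s); rewrite /= ?Hs // Huy Hp Hl.
Qed.

Lemma inL_ext f k u w s : inL f k u w -> ef f w s -> inL f k.+1 u s.
Proof.
elim: k u => [|k IH] u /=.
  by move=> /eqP -> Hws; apply/existsP; exists s; rewrite Hws eqxx.
case/existsP => y /andP [Huy Hy] Hws; apply/existsP; exists y.
by rewrite Huy /=; apply: IH.
Qed.

Lemma inR_bound f u a : ((inR f u a)%:R : R) <=
  \sum_(d < q) sumseq d (fun s => (uniq (u :: s) && path (ef f) u s && (last u s == a))%:R).
Proof.
case: (boolP (inR f u a)) => [/existsP [k Hk]|_]; last first.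
  by apply: sumr_ge0 => d _; apply: sumseq_ge0 => s _; exact: ler0n.
case: (inL_path Hk) => s Hs /andP [Hp /eqP Hl].
rewrite -Hl.
case: (shortenP Hp) => s' Hp' Hu' Hsub.
have Hd : (size s' < q)%N.
  apply: leq_ltn_trans (uniq_leq_size _ Hsub) _.
    by case/andP: Hu'.
  by rewrite Hs ltn_ord.
apply: le_trans (sum_ge_term (Ordinal Hd) _); last first.
  by move=> j; apply: sumseq_ge0 => t _; exact: ler0n.
have := @sumseq_term (size s') (fun s0 => (uniq (u :: s0) && path (ef f) u s0
   && (last u s0 == last u s'))%:R) s' (fun t _ => ler0n _ _) (erefl _).
by rewrite Hu' Hp' eqxx.
Qed.

Lemma path_prod f u s b : ((path (ef f) u (rcons s b))%:R : R) =
  \prod_(p <- zip (u :: s) (rcons s b)) (ef f p.1 p.2)%:R.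
Proof.
elim: s u => [|y s IH] u /=; first by rewrite big_seq1 andbT.
rewrite big_cons /= -IH.
by case: (ef f u y); rewrite ?mul1r ?mul0r.
Qed.

Definition P x y := A x (Some y).

Lemma P_ge0 x y : 0 <= P x y.
Proof. exact: A_ge0. Qed.

Lemma P_le (psi : T -> R) x y :
  (forall x, (0 < deg e x)%N -> psi x <= (deg e x)%:R) ->
  psi x * P x y <= (e x y)%:R.
Proof.
move=> H; rewrite /P /=; case: ifP => exy; last by rewrite mulr0.
have dp := deg_pos exy.
by rewrite ler_pdivrMr ?ltr0n // mul1r; apply: H.
Qed.

Definition V a b d u := sumseq d (fun s =>
  (last u s == a)%:R * \prod_(p <- zip (u :: s) (rcons s b)) P p.1 p.2).

Lemma V_succ a b d u : V a b d.+1 u = \sum_y P u y * V a b d y.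
Proof.
rewrite /V /=; apply: eq_bigr => y _; rewrite -sumseq_scale.
apply: eq_sumseq => s /=; rewrite big_cons /=.
by rewrite mulrCA.
Qed.

Lemma sum_e y : \sum_u ((e u y)%:R : R) = (deg e y)%:R.
Proof.
transitivity (\sum_(u | e u y) (1 : R)).
  by rewrite [RHS]big_mkcond; apply: eq_bigr => u _; case: (e u y).
rewrite sumr_const /deg /nbrs cardsE; congr (_%:R).
by apply: eq_card => u; rewrite -!topredE /= e_sym.
Qed.

Lemma V_bound a b d : forall psi : T -> R, (forall x, 0 <= psi x) ->
  (forall x, (0 < deg e x)%N -> psi x <= (deg e x)%:R) ->
  \sum_u psi u * V a b d u <= 1.
Proof.
elim: d => [|d IH] psi H0 H1.
  rewrite /V /=.
  rewrite (bigD1 a) //= eqxx [X in _ + X]big1 ?addr0; last first.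
    by move=> u Hu; rewrite (negbTE Hu) mul0r mulr0.
  rewrite mul1r big_seq1 /=.
  apply: le_trans (@P_le psi a b H1) _; case: (e a b); [exact: lexx | exact: ler01].
have -> : \sum_u psi u * V a b d.+1 u = \sum_y (\sum_u psi u * P u y) * V a b d y.
  under eq_bigr do rewrite V_succ mulr_sumr.
  rewrite exchange_big; apply: eq_bigr => y _; rewrite mulr_suml.
  by apply: eq_bigr => u _; rewrite mulrA.
apply: IH => [y|y _].
  by apply: sumr_ge0 => u _; apply: mulr_ge0 => //; exact: P_ge0.
rewrite -sum_e; apply: ler_sum => u _; exact: P_le.
Qed.

Lemma V_total a b d : \sum_u V a b d u <= 1.
Proof.
have := @V_bound a b d (fun _ => 1) (fun _ => ler01) _.
under eq_bigr do rewrite mul1r.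
apply => x dp; by rewrite ler1n.
Qed.


Lemma prod_scale (c : R) (r : seq (T * T)) (F : T * T -> R) :
  \prod_(p <- r) (c * F p) = c ^+ size r * \prod_(p <- r) F p.
Proof.
elim: r => [|p r IH]; first by rewrite !big_nil mulr1.
by rewrite !big_cons IH exprS /=; rewrite -!mulrA; congr (_ * _); rewrite mulrCA.
Qed.

Lemma E_path u s a b :
  \sum_f mu f * ((uniq (u :: s) && path (ef f) u s && (last u s == a))%:R * (ef f a b)%:R)
  <= q%:R ^+ (size s).+1 * ((last u s == a)%:R * \prod_(p <- zip (u :: s) (rcons s b)) P p.1 p.2).
Proof.
have Hr : 0 <= q%:R ^+ (size s).+1 * ((last u s == a)%:R * \prod_(p <- zip (u :: s) (rcons s b)) P p.1 p.2).
  apply: mulr_ge0; first by apply: exprn_ge0; exact: ler0n.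
  by apply: mulr_ge0; [exact: ler0n | apply: prodr_ge0 => p _; exact: P_ge0].
case: (boolP (uniq (u :: s))) => Hu; last first.
  by rewrite big1 // => f _; rewrite /= mul0r mulr0.
case: (eqVneq (last u s) a) => Hl; last first.
  rewrite big1; first by rewrite mul0r mulr0.
  by move=> f _; rewrite andbF mul0r mulr0.
rewrite ?andbT ?mul1r.
have E1 : forall f, mu f * ((true && path (ef f) u s && true)%:R * (ef f a b)%:R)
   = mu f * \prod_(p <- zip (u :: s) (rcons s b)) (ef f p.1 p.2)%:R.
  move=> f; rewrite -path_prod rcons_path Hl /=.
  by case: (path _ _ _); case: (ef _ _ _); rewrite /= ?mulr1 ?mulr0 ?mul0r.
rewrite (eq_bigr _ (fun f _ => E1 f)).
have Hm : uniq (map fst (zip (u :: s) (rcons s b))).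
  have := @unzip1_zip _ _ (u :: s) (rcons s b); rewrite size_rcons leqnn => /(_ isT) H; rewrite /unzip1 in H; by rewrite H.
rewrite (E_factor (fun x y t => (Some y \in tval t)%:R) Hm).
have Hsz : size (zip (u :: s) (rcons s b)) = (size s).+1.
  by rewrite size_zip size_rcons /= minnn.
rewrite -Hsz -prod_scale.
apply: ler_prod => p _; apply/andP; split.
  by apply: sumr_ge0 => t _; apply: mulr_ge0; [exact: tw_ge0 | exact: ler0n].
exact: tw_mem.
Qed.

Definition Y a b := \sum_u \sum_f mu f * ((inR f u a)%:R * (ef f a b)%:R).

Lemma c_q_bound : \sum_(d < q) (q%:R : R) ^+ d.+1 <= (c_q q)%:R.
Proof.
rewrite /c_q natr_sum big_ord_recl /=.
have -> : \sum_(i < q) ((q ^ bump 0 i)%:R : R) = \sum_(d < q) q%:R ^+ d.+1.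
  by apply: eq_bigr => i _; rewrite natrX.
by rewrite lerDr.
Qed.

Lemma Y_bound a b : Y a b <= (c_q q)%:R.
Proof.
apply: le_trans c_q_bound.
pose G f u s := (uniq (u :: s) && path (ef f) u s && (last u s == a))%:R : R.
apply: (@le_trans _ _ (\sum_u \sum_f mu f * ((\sum_(d < q) sumseq d (G f u)) * (ef f a b)%:R))).
  apply: ler_sum => u _; apply: ler_sum => f _; apply: ler_wpM2l; first exact: mu_ge0.
  by apply: ler_wpM2r; [exact: ler0n | exact: inR_bound].
have -> : \sum_u \sum_f mu f * ((\sum_(d < q) sumseq d (G f u)) * (ef f a b)%:R)
   = \sum_(d < q) \sum_u sumseq d (fun s => \sum_f mu f * (G f u s * (ef f a b)%:R)).
  rewrite [RHS]exchange_big /=; apply: eq_bigr => u _.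
  transitivity (\sum_f \sum_(d < q) sumseq d (fun s => mu f * (G f u s * (ef f a b)%:R))).
    apply: eq_bigr => f _; rewrite mulr_suml mulr_sumr; apply: eq_bigr => d _.
    rewrite sumseq_scale; congr (_ * _).
    rewrite mulrC -sumseq_scale; apply: eq_sumseq => s; exact: mulrC.
  rewrite exchange_big /=; apply: eq_bigr => d _.
  by rewrite sumseq_sum.
apply: ler_sum => d _.
apply: (@le_trans _ _ (\sum_u sumseq d (fun s => q%:R ^+ d.+1 *
    ((last u s == a)%:R * \prod_(p <- zip (u :: s) (rcons s b)) P p.1 p.2)))).
  apply: ler_sum => u _; apply: sumseq_le => s Hs.
  by rewrite -Hs; exact: E_path.
under eq_bigr do rewrite sumseq_scale.
rewrite -mulr_sumr -[X in _ <= X]mulr1; apply: ler_wpM2l.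
  by apply: exprn_ge0; exact: ler0n.
exact: V_total.
Qed.


Definition Inv (f : source T q) (v : T) (st : state T) : Prop :=
  let: (Q, lvl, E) := st in
  [/\ (forall x l, lvl x = Some l -> (l < q)%N /\ inL f l v x),
      (forall x, x \in Q -> lvl x != None) &
      (forall eps, eps \in E -> exists w s, [/\ eps = [set w; s], inR f v w & ef f w s])].

Lemma lvl_inR (f : source T q) (v : T) (st : state T) x l : Inv f v st -> st.1.2 x = Some l -> inR f v x.
Proof.
case: st => [[Q lvl] E] [H1 _ _] /= Hx.
case: (H1 x l Hx) => Hl Hin; apply/existsP; by exists (Ordinal Hl).
Qed.

Lemma step_inv (f : source T q) (v u : T) (st : state T) o :
  o \in tval (f u) -> Inv f v st -> st.1.2 u != None ->
  Inv f v (step_sample q u st o) /\ (step_sample q u st o).1.2 u != None.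
Proof.
case: st => [[Q lvl] E] Ho Hinv Hu.
have [H1 H2 H3] := Hinv.
case: o Ho => [s|] Ho /=; last by [].
have Hus : ef f u s by [].
case Elu: (lvl u) Hu => [lu|] //= _.
have HuR : inR f v u by apply: (lvl_inR Hinv); rewrite /= Elu.
have HE : forall eps, eps \in [set u; s] |: E ->
    exists w s0, [/\ eps = [set w; s0], inR f v w & ef f w s0].
  move=> eps; rewrite in_setU1 => /orP [/eqP ->|]; last exact: H3.
  by exists u, s.
case Els: (lvl s) => [ls|].
  by split; [split | rewrite /= Elu].
case: ifP => Hlt; last by split; [split | rewrite /= Elu].
split; last by rewrite /= ffunE; case: (u =P s) => _ //; rewrite Elu.
split => //.
- move=> x l; rewrite ffunE; case: eqP => [-> [<-]|_]; last exact: H1.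
  case: (H1 u lu Elu) => _ Hin; split; last exact: inL_ext Hin Hus.
  by move: Hlt; case: q => // q' /=.
- move=> x; rewrite mem_rcons in_cons ffunE; case: eqP => // _ /= Hx; exact: H2.
Qed.

Lemma fold_inv (f : source T q) (v u : T) (l : seq (option T)) (st : state T) :
  {subset l <= tval (f u)} -> Inv f v st -> st.1.2 u != None ->
  Inv f v (foldl (step_sample q u) st l).
Proof.
elim: l st => [|o l IH] st Hsub Hinv Hu //=.
have [Hi' Hu'] := step_inv (Hsub o (mem_head _ _)) Hinv Hu.
apply: IH => // y Hy; apply: Hsub; by rewrite in_cons Hy orbT.
Qed.

Lemma loop_inv (f : source T q) (v : T) fuel (st : state T) : Inv f v st ->
  forall eps, eps \in bfs_loop f fuel st ->
  exists w s, [/\ eps = [set w; s], inR f v w & ef f w s].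
Proof.
elim: fuel st => [|k IH] [[Q lvl] E] Hinv /=.
  by case: Hinv.
case: Q Hinv => [|u Q'] Hinv; first by case: Hinv.
apply: IH; apply: fold_inv => //.
  by case: Hinv => H1 H2 H3; split => // x Hx; apply: H2; rewrite in_cons Hx orbT.
by case: Hinv => _ H2 _; apply: H2; exact: mem_head.
Qed.

Lemma rbfs_inv (f : source T q) (v : T) eps : (0 < q)%N -> eps \in rbfs_edges f v ->
  exists w s, [/\ eps = [set w; s], inR f v w & ef f w s].
Proof.
move=> qp; apply: loop_inv; split.
- move=> x l; rewrite ffunE; case: eqP => [-> [<-]|//]; by split => //=.
- by move=> x; rewrite inE => /eqP ->; rewrite ffunE eqxx.
- by move=> eps'; rewrite inE.
Qed.


Lemma opt_count (z : option T) : \sum_b ((z == Some b)%:R : R) <= 1.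
Proof.
case: z => [b0|]; last by rewrite big1.
rewrite (bigD1 b0) //= eqxx big1 ?addr0 // => b Hb.
by rewrite (inj_eq (@Some_inj _)) eq_sym (negbTE Hb).
Qed.

Lemma ef_count (f : source T q) a : \sum_b ((ef f a b)%:R : R) <= q%:R.
Proof.
apply: (@le_trans _ _ (\sum_b \sum_(i < q) (tnth (f a) i == Some b)%:R)).
  by apply: ler_sum => b _; exact: mem_le_sum.
rewrite exchange_big /=.
apply: (@le_trans _ _ (\sum_(i < q) (1 : R))).
  by apply: ler_sum => i _; exact: opt_count.
by rewrite sumr_const card_ord.
Qed.

Lemma inL_count (f : source T q) k : forall u, \sum_a ((inL f k u a)%:R : R) <= q%:R ^+ k.
Proof.
elim: k => [|k IH] u /=.
  rewrite (bigD1 u) //= eqxx big1 ?addr0 // => a Ha; by rewrite (negbTE Ha).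
apply: (@le_trans _ _ (\sum_a \sum_y (ef f u y)%:R * (inL f k y a)%:R)).
  apply: ler_sum => a _.
  case: (boolP [exists y, _]) => [/existsP [y /andP [H1 H2]]|_]; last first.
    by apply: sumr_ge0 => y _; apply: mulr_ge0; exact: ler0n.
  apply: le_trans (sum_ge_term y _); first by rewrite H1 H2 mulr1.
  by move=> j; apply: mulr_ge0; exact: ler0n.
rewrite exchange_big /=.
apply: (@le_trans _ _ (\sum_y (ef f u y)%:R * q%:R ^+ k)).
  apply: ler_sum => y _; rewrite -mulr_sumr; apply: ler_wpM2l; [exact: ler0n | exact: IH].
rewrite -mulr_suml exprS; apply: ler_wpM2r; [by apply: exprn_ge0; exact: ler0n | exact: ef_count].
Qed.

Lemma inR_count (f : source T q) u : \sum_a ((inR f u a)%:R : R) <= (c_q q)%:R.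
Proof.
apply: (@le_trans _ _ (\sum_a \sum_(k < q) (inL f k u a)%:R)).
  apply: ler_sum => a _.
  case: (boolP (inR f u a)) => [/existsP [k Hk]|_]; last first.
    by apply: sumr_ge0 => k _; exact: ler0n.
  apply: le_trans (sum_ge_term k _); first by rewrite Hk.
  by move=> j; exact: ler0n.
rewrite exchange_big /=.
apply: (@le_trans _ _ (\sum_(k < q) (q%:R : R) ^+ k)).
  by apply: ler_sum => k _; exact: inL_count.
rewrite /c_q natr_sum big_ord_recr /= -[X in X <= _]addr0 lerD //.
  by apply: ler_sum => i _; rewrite natrX.
Qed.

Definition Ind (f : source T q) u a b : R := (inR f u a)%:R * (ef f a b)%:R.

Lemma Ind_ge0 f u a b : 0 <= Ind f u a b.
Proof. by apply: mulr_ge0; exact: ler0n. Qed.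

Lemma pair_count (f : source T q) u : \sum_(c : T * T) Ind f u c.1 c.2 <= (q * c_q q)%:R.
Proof.
rewrite -(pair_bigA _ (fun a b => Ind f u a b)) /=.
apply: (@le_trans _ _ (\sum_a (inR f u a)%:R * q%:R)).
  apply: ler_sum => a _; rewrite /Ind -mulr_sumr; apply: ler_wpM2l; [exact: ler0n | exact: ef_count].
by rewrite -mulr_suml natrM mulrC; apply: ler_wpM2l; [exact: ler0n | exact: inR_count].
Qed.

Lemma set2_eq (w s w' s' : T) : [set w; s] = [set w'; s'] ->
  (w' = w /\ s' = s) \/ (w' = s /\ s' = w).
Proof.
move=> H.
have h1 : w' \in [set w; s] by rewrite H set21.
have h2 : s' \in [set w; s] by rewrite H set22.
have h3 : w \in [set w'; s'] by rewrite -H set21.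
have h4 : s \in [set w'; s'] by rewrite -H set22.
move: h1 h2 h3 h4; rewrite !inE.
case/orP => /eqP E1; case/orP => /eqP E2; subst.
- by move=> _ /orP [] /eqP ->; left.
- by left.
- by right.
- by move=> /orP [] /eqP -> _; left.
Qed.

Lemma bad_bound (f1 f2 : source T q) u v : (0 < q)%N ->
  1 - ((rbfs_edges f1 u :&: rbfs_edges f2 v == set0)%:R : R) <=
  \sum_(c : T * T) Ind f1 u c.1 c.2 * (Ind f2 v c.1 c.2 + Ind f2 v c.2 c.1).
Proof.
move=> qp.
have Hge : forall c : T * T, 0 <= Ind f1 u c.1 c.2 * (Ind f2 v c.1 c.2 + Ind f2 v c.2 c.1).
  by move=> c; apply: mulr_ge0; [|apply: addr_ge0]; exact: Ind_ge0.
case: (boolP (rbfs_edges f1 u :&: rbfs_edges f2 v == set0)) => [_|/set0Pn [eps]].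
  by rewrite subrr; apply: sumr_ge0 => c _; exact: Hge.
rewrite inE => /andP [Hx1 Hx2].
rewrite subr0.
have [w [s [E1 R1 F1]]] := rbfs_inv qp Hx1.
have [w' [s' [E2 R2 F2]]] := rbfs_inv qp Hx2.
apply: le_trans (sum_ge_term (w, s) Hge); rewrite /= /Ind R1 F1 !mul1r.
have := set2_eq (etrans (esym E1) E2).
case=> [[Ew Es]|[Ew Es]]; subst.
  by rewrite R2 F2 mul1r lerDl mulr_ge0 ?ler0n.
by rewrite R2 F2 mul1r lerDr mulr_ge0 ?ler0n.
Qed.


Lemma gen_exchange (I C : finType) (al : I -> R) (x y : I -> C -> R) :
  \sum_i \sum_j al i * al j * (\sum_c x i c * y j c)
  = \sum_c (\sum_i al i * x i c) * (\sum_j al j * y j c).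
Proof.
transitivity (\sum_i \sum_j \sum_c (al i * x i c) * (al j * y j c)).
  apply: eq_bigr => i _; apply: eq_bigr => j _; rewrite mulr_sumr.
  by apply: eq_bigr => c _; rewrite mulrACA.
under [RHS]eq_bigr do rewrite big_distrlr.
rewrite [RHS]exchange_big /=; apply: eq_bigr => i _.
by rewrite [RHS]exchange_big.
Qed.

Lemma main_sec (alpha : R) :
  (0 < q)%N -> 0 < alpha -> alpha <= 1 ->
  (q * c_q q)%:R / alpha ^+ 2 <= #|T|%:R ->
  1 - 2 * alpha * (q * c_q q)%:R <= prob_disjoint e q R.
Proof.
move=> qp ap a1 hn.
set C := c_q q. set N : R := #|T|%:R. set K : R := ((#|T| ^ 2)%:R)^-1.
have Cp : (0 < C)%N by rewrite /C /c_q big_ord_recl /= expn0 add1n.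
have QCp : 0 < (q * C)%:R :> R by rewrite ltr0n muln_gt0 qp Cp.
have Np : 0 < N.
  apply: lt_le_trans hn; apply: divr_gt0 => //; exact: exprn_gt0.
have KE : K = (N * N)^-1 by rewrite /K natrX expr2.
have K0 : 0 <= K by rewrite KE invr_ge0; apply: mulr_ge0; apply: ltW.
pose Ip (p1 p2 : T * source T q) : R :=
  if rbfs_edges p1.2 p1.1 :&: rbfs_edges p2.2 p2.1 == set0 then 1 else 0.
have Eprob : prob_disjoint e q R =
    \sum_(p1 : T * source T q) \sum_(p2 : T * source T q)
       K * mu p1.2 * mu p2.2 * Ip p1 p2.
  rewrite /prob_disjoint -/K.
  rewrite -(pair_bigA _ (fun u f1 => \sum_(p2 : T * source T q)
     K * mu f1 * mu p2.2 * Ip (u, f1) p2)) /=.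
  apply: eq_bigr => u _; rewrite exchange_big /=; apply: eq_bigr => f1 _.
  by rewrite (pair_bigA _ (fun v f2 => K * mu f1 * mu f2 * Ip (u, f1) (v, f2))).
have Smu : \sum_(p : T * source T q) mu p.2 = N.
  rewrite -(pair_bigA _ (fun u f => mu f)) /=.
  under eq_bigr do rewrite mu_sum.
  by rewrite sumr_const.
have Wsum : \sum_(p1 : T * source T q) \sum_(p2 : T * source T q)
    K * mu p1.2 * mu p2.2 = 1.
  transitivity (\sum_(p1 : T * source T q) K * mu p1.2 * N).
    by apply: eq_bigr => p1 _; rewrite -Smu mulr_sumr.
  rewrite -mulr_suml -mulr_sumr Smu -mulrA KE mulVf //.
  by rewrite mulf_neq0 // gt_eqF.
pose Yp (c : T * T) := \sum_(p : T * source T q) mu p.2 * Ind p.2 p.1 c.1 c.2.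
have YpE : forall c, Yp c = Y c.1 c.2.
  move=> c; rewrite /Yp /Y.
  by rewrite (pair_bigA _ (fun u f => mu f * Ind f u c.1 c.2)).
have Yp0 : forall c, 0 <= Yp c.
  move=> c; apply: sumr_ge0 => p _; apply: mulr_ge0; [exact: mu_ge0 | exact: Ind_ge0].
have YpC : forall c, Yp c <= C%:R by move=> c; rewrite YpE; exact: Y_bound.
have Ysum : \sum_c Yp c <= N * (q * C)%:R.
  rewrite /Yp exchange_big /=.
  apply: (@le_trans _ _ (\sum_(p : T * source T q) mu p.2 * (q * C)%:R)).
    apply: ler_sum => p _; rewrite -mulr_sumr; apply: ler_wpM2l; first exact: mu_ge0.
    exact: pair_count.
  by rewrite -mulr_suml Smu.
have Hbad : 1 - prob_disjoint e q R <= K * (2 * C%:R * (N * (q * C)%:R)).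
  rewrite Eprob -{1}Wsum -sumrB.
  apply: (@le_trans _ _ (\sum_(p1 : T * source T q) \sum_(p2 : T * source T q)
     K * (mu p1.2 * mu p2.2 * \sum_(c : T * T) Ind p1.2 p1.1 c.1 c.2 *
        (Ind p2.2 p2.1 c.1 c.2 + Ind p2.2 p2.1 c.2 c.1)))).
    apply: ler_sum => p1 _; rewrite -sumrB; apply: ler_sum => p2 _.
    rewrite -[X in X - _]mulr1 -mulrBr !mulrA; apply: ler_wpM2l.
      by apply: mulr_ge0; [apply: mulr_ge0 => //|]; exact: mu_ge0.
    have := @bad_bound p1.2 p2.2 p1.1 p2.1 qp.
    by rewrite /Ip; case: (_ == set0).
  under eq_bigr do rewrite -mulr_sumr.
  rewrite -mulr_sumr.
  apply: ler_wpM2l => //.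
  rewrite (gen_exchange (fun p : T * source T q => mu p.2)
     (fun p c => Ind p.2 p.1 c.1 c.2)
     (fun p c => Ind p.2 p.1 c.1 c.2 + Ind p.2 p.1 c.2 c.1)).
  apply: (@le_trans _ _ (\sum_(c : T * T) Yp c * (2 * C%:R))).
    apply: ler_sum => c _.
    have -> : \sum_(p : T * source T q) mu p.2 * (Ind p.2 p.1 c.1 c.2 + Ind p.2 p.1 c.2 c.1)
       = Yp c + Yp (c.2, c.1).
      by rewrite /Yp -big_split /=; apply: eq_bigr => p _; rewrite mulrDr.
    apply: ler_wpM2l; first exact: Yp0.
    by rewrite mulr_natl mulr2n; apply: lerD; exact: YpC.
  rewrite -mulr_suml mulrC; apply: ler_wpM2l => //.
  by apply: mulr_ge0; [exact: ler0n | exact: ler0n].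
have CN : C%:R / N <= alpha.
  rewrite ler_pdivrMr //.
  have h1 : (q * C)%:R <= N * alpha ^+ 2.
    by rewrite -ler_pdivrMr //; apply: exprn_gt0.
  have h2 : (C%:R : R) <= (q * C)%:R by rewrite ler_nat leq_pmull.
  have h3 : N * alpha ^+ 2 <= alpha * N.
    have hN : 0 <= alpha * N by apply: mulr_ge0; apply: ltW.
    have -> : N * alpha ^+ 2 = alpha * N * alpha by ring.
    by rewrite -[X in _ <= X]mulr1; apply: ler_wpM2l.
  by apply: le_trans h2 (le_trans h1 h3).
have Hfin : K * (2 * C%:R * (N * (q * C)%:R)) = 2 * (q * C)%:R * (C%:R / N).
  rewrite KE; field; by rewrite gt_eqF.
have H2 : 2 * (q * C)%:R * (C%:R / N) <= 2 * alpha * (q * C)%:R.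
  rewrite [X in _ <= X]mulrAC; apply: ler_wpM2l => //.
  by apply: mulr_ge0 => //; apply: ltW.
rewrite Hfin in Hbad; have := le_trans Hbad H2 => H.
lra.
Qed.

End Proof.

Unset Implicit Arguments.

Theorem lemma3p8 (R : realFieldType) (T : finType) (e : rel T)
  (e_sym : symmetric e) (e_irr : irreflexive e)
  (q : nat) (alpha : R) :
  (0 < q)%N -> 0 < alpha -> alpha <= 1 ->
  (q * c_q q)%:R / alpha ^+ 2 <= #|T|%:R ->
  1 - 2 * alpha * (q * c_q q)%:R <= prob_disjoint e q R.
Proof.
move=> qp ap a1 hn.
exact: (@main_sec R T e q e_sym alpha qp ap a1 hn).
Qed.
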